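(* Let $K$ be a positive integer dividing $T$ and $\epsilon,\delta,\eta>0$, and suppose $\widehat{\mathcal K}:=\{\mathbf x\in\mathcal K:\ g_t(\mathbf x)\le0\ \forall t\in[T]\}\neq\emptyset$. Then the iterates $\{\mathbf x_m,\lambda_m\}$ of Algorithm PD (described in the context) satisfy, for every $\mathbf x\in\widehat{\mathcal K}$ and every $\lambda\ge0$, $$\sum_{t=1}^{T}\Big(\mathcal L_t(\mathbf x_{m(t)},\lambda)-\mathcal L_t(\mathbf x,\lambda_{m(t)})\Big)\le\frac{2R^2}{\eta}+\frac{\lambda^2}{2\eta}+G_f\sqrt{3\epsilon}\,T+G_f^2\eta KT+4G_g^2R^2\eta KT+G_g\sqrt{3\epsilon}\,K\sum_{m=1}^{T/K}\lambda_m+\big(\delta^2\eta^3K^2+G_g^2\eta K^2\big)\sum_{m=1}^{T/K}\lambda_m^2,$$ where $\mathcal L_t(\mathbf x,\lambda):=f_t(\mathbf x)+\lambda g_t^+(\mathbf x)-\frac{\delta\eta}{2}\lambda^2$.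
   Context: Let $\mathcal K\subset\mathbb R^n$ be convex and compact with $\mathbf 0\in\mathcal K\subseteq R\mathcal B$, where $\mathcal B$ is the closed origin-centered unit Euclidean ball and $R>0$. There are $T$ rounds with an arbitrary sequence of functions $f_1,\dots,f_T,g_1,\dots,g_T:\mathbb R^n\to\mathbb R$, each convex on $R\mathcal B$, such that every subgradient of every $f_t$ (resp. $g_t$) at points of $R\mathcal B$ has Euclidean norm at most $G_f$ (resp. $G_g$). Write $g_t^+(\mathbf x)=\max\{g_t(\mathbf x),0\}$. At the end of round $t$ the functions $f_t,g_t$ are revealed to the algorithm. For a block size $K$ (a positive integer dividing $T$) let $m(t)=\lceil t/K\rceil$ and $\mathcal T_m=\{(m-1)K+1,\dots,mK\}$ for $m\in[T/K]$. $\Pi_{R\mathcal B}$ denotes Euclidean projection onto $R\mathcal B$. Linear optimization oracle (LOO) of a convex compact set $S$: given $\mathbf c\in\mathbb R^n$, returns some point of $\arg\min_{\mathbf x\in S}\mathbf c^\top\mathbf x$. Procedure FW$(\mathbf x_1,\mathbf y,\epsilon;S)$ with $\mathbf x_1\in S$: for $i=1,2,\dots$: call the LOO of $S$ to get $\mathbf v_i\in\arg\min_{\mathbf x\in S}(\mathbf x_i-\mathbf y)^\top\mathbf x$; if $(\mathbf x_i-\mathbf y)^\top(\mathbf x_i-\mathbf v_i)\le\epsilon$ or $\|\mathbf x_i-\mathbf y\|^2\le 3\epsilon$, return $\mathbf x_i$; otherwise let $\sigma_i\in\arg\min_{\sigma\in[0,1]}\|\mathbf y-\mathbf x_i-\sigma(\mathbf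 v_i-\mathbf x_i)\|^2$ and $\mathbf x_{i+1}=\mathbf x_i+\sigma_i(\mathbf v_i-\mathbf x_i)$. Procedure $\mathcal O_{AFP}(\mathbf y_1,\mathbf x_0,\epsilon,S)$ with $\mathbf x_0\in S$: if $\|\mathbf x_0-\mathbf y_1\|^2\le3\epsilon$ return $(\mathbf x_0,\mathbf y_1)$. Otherwise for $i=1,2,\dots$: $\mathbf x_i=$FW$(\mathbf x_{i-1},\mathbf y_i,\epsilon;S)$; if $\|\mathbf x_i-\mathbf y_i\|^2>3\epsilon$ set $\mathbf y_{i+1}=\mathbf y_i-\frac23(\mathbf y_i-\mathbf x_i)$, else return $(\mathbf x_i,\mathbf y_i)$. Algorithm PD (parameters $T,K,\epsilon,\delta,\eta>0$): set $\mathbf x_1=\widetilde{\mathbf y}_1$ to an arbitrary point of $\mathcal K$ and $\lambda_1=0$. For $m=1,\dots,T/K$: for each $t\in\mathcal T_m$, play $\mathbf x_m$, observe $f_t,g_t$, and pick $\nabla f_t\in\partial f_t(\mathbf x_m)$, $\nabla g_t^+\in\partial g_t^+(\mathbf x_m)$. Then set $\nabla_{m,\mathbf x}=\sum_{t\in\mathcal T_m}(\nabla f_t+\lambda_m\nabla g_t^+)$, $\nabla_{m,\lambda}=\sum_{t\in\mathcal T_m}(g_t^+(\mathbf x_m)-\delta\eta\lambda_m)$, $\mathbf y_{m+1}=\Pi_{R\mathcal B}[\widetilde{\mathbf y}_m-\eta\nabla_{m,\mathbf x}]$, $(\mathbf x_{m+1},\widetilde{\mathbf y}_{m+1})=\mathcal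 O_{AFP}(\mathbf y_{m+1},\mathbf x_m,\epsilon,\mathcal K)$, and $\lambda_{m+1}=\max\{0,\lambda_m+\eta\nabla_{m,\lambda}\}$. On round $t$ the played point is $\mathbf x_{m(t)}$.
   Formalization: Each fₜ and gₜ is convex on all of ℝⁿ rather than only on $R\mathcal B$, and subgradients are the global ones (h with fₜ(x) + hᵀ(z − x) ≤ fₜ(z) for every z ∈ ℝⁿ). The paper assumes this as well. *)

(* Defs.v *)
From HB Require Import structures.
From mathcomp Require Import all_boot all_order all_algebra.
From mathcomp Require Import all_classical all_reals all_analysis.
Set Implicit Arguments. Unset Strict Implicit. Unset Printing Implicit Defensive.
Import Order.TTheory GRing.Theory Num.Theory.
Import numFieldNormedType.Exports.
Local Open Scope classical_set_scope.
Local Open Scope ring_scope.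

Section Defs.
Variables (R : realType) (n : nat).
Notation vec := 'rV[R]_n.

Definition dotv (u v : vec) : R := \sum_(i < n) u ord0 i * v ord0 i.
Definition enorm (u : vec) : R := Num.sqrt (dotv u u).

Definition ball_set (r : R) : set vec := [set x | enorm x <= r].

Definition convex_set_of (S : set vec) : Prop :=
  forall x y, S x -> S y -> forall th : R, 0 <= th <= 1 ->
    S (th *: x + (1 - th) *: y).

Definition convex_fun_on (S : set vec) (f : vec -> R) : Prop :=
  forall x y, S x -> S y -> forall th : R, 0 <= th <= 1 ->
    f (th *: x + (1 - th) *: y) <= th * f x + (1 - th) * f y.

Definition subgrad (f : vec -> R) (x h : vec) : Prop :=
  forall z, f x + dotv h (z - x) <= f z.

Definition posp (f : vec -> R) : vec -> R := fun x => Num.max (f x) 0.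

(* v is a possible output of the linear optimization oracle of S on c *)
Definition LOO (S : set vec) (c v : vec) : Prop :=
  S v /\ forall z, S z -> dotv c v <= dotv c z.

Definition proj (S : set vec) (v p : vec) : Prop :=
  S p /\ forall z, S z -> enorm (v - p) <= enorm (v - z).

(* FW_run S eps x y out : some admissible run of FW(x, y, eps; S) returns out *)
Inductive FW_run (S : set vec) (eps : R) : vec -> vec -> vec -> Prop :=
| FW_stop x y v : LOO S (x - y) v ->
    (dotv (x - y) (x - v) <= eps \/ enorm (x - y) ^+ 2 <= 3 * eps) ->
    FW_run S eps x y x
| FW_step x y v sig out : LOO S (x - y) v ->
    ~ (dotv (x - y) (x - v) <= eps \/ enorm (x - y) ^+ 2 <= 3 * eps) ->
    0 <= sig <= 1 ->
    (forall s : R, 0 <= s <= 1 ->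
       enorm (y - x - sig *: (v - x)) ^+ 2 <= enorm (y - x - s *: (v - x)) ^+ 2) ->
    FW_run S eps (x + sig *: (v - x)) y out ->
    FW_run S eps x y out.

(* main loop of O_AFP started at iteration i with x_{i-1} = xp, y_i = y;
   outputs (xo, yo) *)
Inductive AFP_loop (S : set vec) (eps : R) : vec -> vec -> vec -> vec -> Prop :=
| AFP_ret xp y x : FW_run S eps xp y x -> enorm (x - y) ^+ 2 <= 3 * eps ->
    AFP_loop S eps xp y x y
| AFP_cont xp y x xo yo : FW_run S eps xp y x -> 3 * eps < enorm (x - y) ^+ 2 ->
    AFP_loop S eps x (y - (2 / 3) *: (y - x)) xo yo ->
    AFP_loop S eps xp y xo yo.

(* AFP_run S eps y1 x0 xo yo : some admissible run of O_AFP(y1, x0, eps, S)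
   returns (xo, yo) *)
Definition AFP_run (S : set vec) (eps : R) (y1 x0 xo yo : vec) : Prop :=
  (enorm (x0 - y1) ^+ 2 <= 3 * eps /\ xo = x0 /\ yo = y1) \/
  (3 * eps < enorm (x0 - y1) ^+ 2 /\ AFP_loop S eps x0 y1 xo yo).

End Defs.

(* m(t) = ceil(t / K) for t >= 1 *)
Definition mblk (K t : nat) : nat := (t.-1 %/ K).+1.

Definition lagr (R : realType) (n : nat) (delta eta : R)
  (ft gt : 'rV[R]_n -> R) (x : 'rV[R]_n) (lam : R) : R :=
  ft x + lam * posp gt x - delta * eta / 2 * lam ^+ 2.

(* (x, yt, y, lam, df, dg) is an admissible run of Algorithm PD:
   x m = x_m, yt m = tilde y_m, y m = y_m, lam m = lambda_m,
   df t, dg t = the subgradients picked at round t. *)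
Definition PD_run (R : realType) (n : nat) (Kset : set 'rV[R]_n) (Rad : R)
  (T K : nat) (eps delta eta : R) (f g : nat -> 'rV[R]_n -> R)
  (x yt y : nat -> 'rV[R]_n) (lam : R^nat) (df dg : nat -> 'rV[R]_n) : Prop :=
  [/\ Kset (x 1%N), yt 1%N = x 1%N, lam 1%N = 0,
      (forall t, (1 <= t <= T)%N ->
         subgrad (f t) (x (mblk K t)) (df t) /\
         subgrad (posp (g t)) (x (mblk K t)) (dg t)) &
      (forall m, (1 <= m <= T %/ K)%N ->
        let gx := \sum_((m.-1 * K).+1 <= t < (m * K).+1) (df t + lam m *: dg t) in
        let gl := \sum_((m.-1 * K).+1 <= t < (m * K).+1)
                     (posp (g t) (x m) - delta * eta * lam m) in
        [/\ proj (@ball_set _ n Rad) (yt m - eta *: gx) (y m.+1),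
            AFP_run Kset eps (y m.+1) (x m) (x m.+1) (yt m.+1) &
            lam m.+1 = Num.max 0 (lam m + eta * gl)])].

(* Main.v *)
Require Import Defs.
From HB Require Import structures.
From mathcomp Require Import all_boot all_order all_algebra.
From mathcomp Require Import all_classical all_reals all_analysis.
From mathcomp Require Import ring lra zify.
Import Order.TTheory GRing.Theory Num.Theory.
Import numFieldNormedType.Exports.
Local Open Scope classical_set_scope.
Local Open Scope ring_scope.




Lemma dotvC {R : realType} {n : nat} (u v : 'rV[R]_n) : dotv u v = dotv v u.
Proof. by rewrite /dotv; apply: eq_bigr => i _; rewrite mulrC. Qed.

Lemma dotvDl {R : realType} {n : nat} (u v w : 'rV[R]_n) :
  dotv (u + v) w = dotv u w + dotv v w.
Proof. by rewrite /dotv -big_split; apply: eq_bigr => i _; rewrite mxE mulrDl. Qed.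

Lemma dotvZl {R : realType} {n : nat} (a : R) (u v : 'rV[R]_n) :
  dotv (a *: u) v = a * dotv u v.
Proof. by rewrite /dotv mulr_sumr; apply: eq_bigr => i _; rewrite mxE mulrA. Qed.

Lemma dotvNl {R : realType} {n : nat} (u v : 'rV[R]_n) : dotv (- u) v = - dotv u v.
Proof. by rewrite -scaleN1r dotvZl mulN1r. Qed.

Lemma dotvBl {R : realType} {n : nat} (u v w : 'rV[R]_n) :
  dotv (u - v) w = dotv u w - dotv v w.
Proof. by rewrite dotvDl dotvNl. Qed.

Lemma dotv0l {R : realType} {n : nat} (v : 'rV[R]_n) : dotv 0 v = 0.
Proof. by rewrite -(scale0r (0 : 'rV[R]_n)) dotvZl mul0r. Qed.

Lemma dotvDr {R : realType} {n : nat} (u v w : 'rV[R]_n) :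
  dotv w (u + v) = dotv w u + dotv w v.
Proof. by rewrite dotvC dotvDl !(dotvC w). Qed.

Lemma dotvZr {R : realType} {n : nat} (a : R) (u v : 'rV[R]_n) :
  dotv v (a *: u) = a * dotv v u.
Proof. by rewrite dotvC dotvZl dotvC. Qed.

Lemma dotvNr {R : realType} {n : nat} (u v : 'rV[R]_n) : dotv v (- u) = - dotv v u.
Proof. by rewrite dotvC dotvNl dotvC. Qed.

Lemma dotvBr {R : realType} {n : nat} (u v w : 'rV[R]_n) :
  dotv w (u - v) = dotv w u - dotv w v.
Proof. by rewrite dotvDr dotvNr. Qed.

Lemma dotv0r {R : realType} {n : nat} (v : 'rV[R]_n) : dotv v 0 = 0.
Proof. by rewrite dotvC dotv0l. Qed.

Lemma dotvv_ge0 {R : realType} {n : nat} (u : 'rV[R]_n) : 0 <= dotv u u.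
Proof. by apply: sumr_ge0 => i _; rewrite -expr2 sqr_ge0. Qed.

Lemma dotvv_eq0 {R : realType} {n : nat} (u : 'rV[R]_n) : dotv u u = 0 -> u = 0.
Proof.
move=> H; apply/rowP => i; rewrite mxE.
have := @psumr_eq0P R _ xpredT (fun i => u ord0 i * u ord0 i).
move=> /(_ _ H i isT) => /(_ _)/eqP; rewrite mulf_eq0 orbb => /(_ _)/eqP; apply.
by move=> j _; rewrite -expr2 sqr_ge0.
Qed.

Lemma enorm_sq {R : realType} {n : nat} (u : 'rV[R]_n) : enorm u ^+ 2 = dotv u u.
Proof. by rewrite /enorm sqr_sqrtr // dotvv_ge0. Qed.

Lemma enorm_ge0 {R : realType} {n : nat} (u : 'rV[R]_n) : 0 <= enorm u.
Proof. exact: sqrtr_ge0. Qed.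

Lemma dotv_comb {R : realType} {n : nat} (a b : R) (u v : 'rV[R]_n) :
  dotv (a *: u + b *: v) (a *: u + b *: v) =
  a ^+ 2 * dotv u u + 2 * a * b * dotv u v + b ^+ 2 * dotv v v.
Proof.
rewrite !dotvDl !dotvDr !dotvZl !dotvZr (dotvC v u); ring.
Qed.

Lemma enorm0 {R : realType} {n : nat} : enorm (0 : 'rV[R]_n) = 0.
Proof. by rewrite /enorm dotv0l sqrtr0. Qed.

Lemma enorm_eq0 {R : realType} {n : nat} (u : 'rV[R]_n) : enorm u = 0 -> u = 0.
Proof.
move=> H; apply: dotvv_eq0; by rewrite -enorm_sq H expr0n.
Qed.

Lemma CS {R : realType} {n : nat} (u v : 'rV[R]_n) : dotv u v <= enorm u * enorm v.
Proof.
have := dotvv_ge0 (enorm v *: u + (- enorm u) *: v).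
rewrite dotv_comb -!enorm_sq.
have hu := enorm_ge0 u; have hv := enorm_ge0 v.
have [eu|nu] := eqVneq (enorm u) 0.
  by move=> _; rewrite eu (enorm_eq0 _ eu) dotv0l mul0r.
have [ev|nv] := eqVneq (enorm v) 0.
  by move=> _; rewrite ev (enorm_eq0 _ ev) dotv0r mulr0.
have pu : 0 < enorm u by rewrite lt_def nu hu.
have pv : 0 < enorm v by rewrite lt_def nv hv.
have p := mulr_gt0 pu pv.
move=> H; nra.
Qed.

Lemma enormD {R : realType} {n : nat} (u v : 'rV[R]_n) :
  enorm (u + v) <= enorm u + enorm v.
Proof.
have h1 : enorm (u + v) ^+ 2 <= (enorm u + enorm v) ^+ 2.
  rewrite enorm_sq -(scale1r u) -(scale1r v) dotv_comb !scale1r sqrrD -!enorm_sq.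
  have := CS u v; nra.
have := enorm_ge0 (u + v); have := enorm_ge0 u; have := enorm_ge0 v; nra.
Qed.

Lemma enormZ {R : realType} {n : nat} (a : R) (u : 'rV[R]_n) :
  enorm (a *: u) = `|a| * enorm u.
Proof.
rewrite /enorm dotvZl dotvZr mulrA -expr2 sqrtrM ?sqr_ge0 //.
by rewrite sqrtr_sqr.
Qed.

Lemma enormN {R : realType} {n : nat} (u : 'rV[R]_n) : enorm (- u) = enorm u.
Proof. by rewrite -scaleN1r enormZ normrN normr1 mul1r. Qed.

Lemma enorm_sum {R : realType} {n : nat} (I : Type) (r : seq I) (P : pred I)
  (F : I -> 'rV[R]_n) :
  enorm (\sum_(i <- r | P i) F i) <= \sum_(i <- r | P i) enorm (F i).
Proof.
apply: (big_ind2 (fun a b => enorm a <= b)).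
- by rewrite enorm0.
- move=> a1 b1 a2 b2 h1 h2; apply: le_trans (enormD _ _) _; exact: lerD.
- by [].
Qed.

Lemma dotv_suml {R : realType} {n : nat} (I : Type) (r : seq I) (P : pred I)
  (F : I -> 'rV[R]_n) v :
  dotv (\sum_(i <- r | P i) F i) v = \sum_(i <- r | P i) dotv (F i) v.
Proof.
apply: (big_ind2 (fun a b => dotv a v = b)).
- by rewrite dotv0l.
- by move=> a1 b1 a2 b2 <- <-; rewrite dotvDl.
- by [].
Qed.

Lemma enorm_le_sq {R : realType} {n : nat} (u : 'rV[R]_n) (c : R) :
  0 <= c -> dotv u u <= c ^+ 2 -> enorm u <= c.
Proof.
move=> c0 h; rewrite -enorm_sq in h; have := enorm_ge0 u; nra.
Qed.



Definition evec {R : realType} {n : nat} (k : 'I_n) : 'rV[R]_n := \row_j (j == k)%:R.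
Definition supp {R : realType} {n : nat} (P : pred 'I_n) (d : 'rV[R]_n) :=
  forall i, ~~ P i -> d ord0 i = 0.
Definition valid {R : realType} {n : nat} (phi : 'rV[R]_n -> R) (P : pred 'I_n) c :=
  forall d, supp P d -> dotv c d <= phi d.

Lemma dotv_evec {R : realType} {n : nat} (c : 'rV[R]_n) k : dotv c (evec k) = c ord0 k.
Proof.
rewrite /dotv (bigD1 k) //= mxE eqxx mulr1 big1 ?addr0 // => j /negbTE.
by rewrite mxE => ->; rewrite mulr0.
Qed.

Lemma valid_mono {R : realType} {n : nat} {phi : 'rV[R]_n -> R} {P Q : pred 'I_n} {c} :
  valid phi P c -> (forall i, Q i -> P i) -> valid phi Q c.
Proof.
move=> hv hq d hd; apply: hv => i hi; apply: hd; apply/negP => /hq.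
by apply/negP.
Qed.

Lemma AB {R : realType} {n : nat} (phi : 'rV[R]_n -> R) P c k d1 d2 (s t : R) :
  convex_fun_on setT phi -> valid phi P c -> supp P d1 -> supp P d2 ->
  0 < s -> 0 < t ->
  t * (dotv c d1 - phi (d1 - s *: evec k)) <= s * (phi (d2 + t *: evec k) - dotv c d2).
Proof.
move=> cv hv h1 h2 s0 t0.
have st0 : 0 < s + t by lra.
have stn : s + t != 0 by rewrite gt_eqF.
set th := t / (s + t).
have th01 : 0 <= th <= 1.
  apply/andP; split; first by rewrite divr_ge0 // ltW.
  by rewrite ler_pdivrMr // mul1r; lra.
set v := th *: d1 + (1 - th) *: d2.
have hsv : supp P v.
  move=> i hi; rewrite /v !mxE h1 // h2 //; ring.
have ee : th *: (d1 - s *: evec k) + (1 - th) *: (d2 + t *: evec k) = v.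
  apply/rowP => i; rewrite /v /th !mxE; field; exact: stn.
have := cv (d1 - s *: evec k) (d2 + t *: evec k) I I th th01; rewrite ee => hc.
have := hv _ hsv; rewrite /v dotvDr !dotvZr => hd.
have : th * dotv c d1 + (1 - th) * dotv c d2 <=
   th * phi (d1 - s *: evec k) + (1 - th) * phi (d2 + t *: evec k) by lra.
rewrite /th => H.
have H2 := ler_wpM2l (ltW st0) H.
have e1 : (s + t) * (t / (s + t) * dotv c d1 + (1 - t / (s + t)) * dotv c d2)
   = t * dotv c d1 + s * dotv c d2 by field; exact: stn.
have e2 : (s + t) * (t / (s + t) * phi (d1 - s *: evec k) + (1 - t / (s + t)) * phi (d2 + t *: evec k))
   = t * phi (d1 - s *: evec k) + s * phi (d2 + t *: evec k) by field; exact: stn.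
rewrite e1 e2 in H2; lra.
Qed.

Lemma ext_step {R : realType} {n : nat} (phi : 'rV[R]_n -> R) (P : pred 'I_n) c k b :
  convex_fun_on setT phi -> valid phi P c ->
  (forall d t, supp P d -> 0 < t -> b * t <= phi (d + t *: evec k) - dotv c d) ->
  exists c', [/\ valid phi (fun i => P i || (i == k)) c', b <= c' ord0 k &
     forall i, i != k -> c' ord0 i = c ord0 i].
Proof.
move=> cv hv hb.
pose A := [set a : R | exists d s, [/\ supp P d, 0 < s &
   a = (dotv c d - phi (d - s *: evec k)) / s]].
have s0 : supp P (0 : 'rV[R]_n) by move=> i _; rewrite mxE.
have AB' : forall a d t, A a -> supp P d -> 0 < t -> a * t <= phi (d + t *: evec k) - dotv c d.
  move=> a d t [d1 [s [hd1 hs ->]]] hd ht.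
  have := AB _ _ _ k _ _ _ _ cv hv hd1 hd hs ht.
  rewrite mulrAC ler_pdivrMr // => H; lra.
have Ane : A !=set0.
  by exists ((dotv c 0 - phi (0 - 1 *: evec k)) / 1); exists 0, 1; split.
have Aub : has_ubound A.
  exists (phi (0 + 1 *: evec k) - dotv c 0) => a ha.
  by have := AB' a 0 1 ha s0 ltr01; rewrite mulr1.
set g := Num.max (sup A) b.
have gE : g = sup A \/ g = b by rewrite /g /Order.max; case: ifP; auto.
have gge : sup A <= g /\ b <= g by rewrite /g le_max lexx le_max lexx orbT.
have gB : forall d t, supp P d -> 0 < t -> g * t <= phi (d + t *: evec k) - dotv c d.
  move=> d t hd ht; have [->|->] := gE; last exact: hb.
  rewrite -ler_pdivlMr //; apply: ge_sup => // a ha.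
  by rewrite ler_pdivlMr //; apply: AB'.
have gA : forall d s, supp P d -> 0 < s -> dotv c d - phi (d - s *: evec k) <= g * s.
  move=> d s hd hs; rewrite -ler_pdivrMr //; apply: le_trans (proj1 gge).
  by apply: ub_le_sup => //; exists d, s; split.
exists (c + (g - c ord0 k) *: evec k); split.
- move=> d hd.
  set s := d ord0 k.
  set d' := d - s *: evec k.
  have hd' : supp P d'.
    move=> i hi; rewrite /d' /s !mxE.
    have [ik|ik] := eqVneq i k; first by rewrite /= mulr1n mulr1 ik subrr.
    by rewrite /= mulr0n mulr0 subr0 hd // negb_or hi ik.
  have ed : d = d' + s *: evec k by rewrite /d' subrK.
  have ec : dotv (c + (g - c ord0 k) *: evec k) d = dotv c d' + g * s.
    have -> : dotv c d' = dotv c d - s * c ord0 k by rewrite /d' dotvBr dotvZr dotv_evec.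
    rewrite dotvDl dotvZl (dotvC (evec k)) dotv_evec /s; ring.
  rewrite ec.
  have [sp|sn|s0'] := ltgtP s 0.
  + have := gA d' (- s) hd'; rewrite oppr_gt0 => /(_ sp).
    by rewrite scaleNr opprK -ed; lra.
  + by have := gB d' s hd' sn; rewrite -ed; lra.
  + have := hv d' hd'; rewrite ed s0' scale0r addr0 mulr0 addr0; done.
- by rewrite !mxE eqxx mulr1 addrC subrK; exact: (proj2 gge).
- by move=> i ik; rewrite !mxE (negbTE ik) mulr0 addr0.
Qed.

Lemma ext_step_any {R : realType} {n : nat} (phi : 'rV[R]_n -> R) (P : pred 'I_n) c k :
  convex_fun_on setT phi -> valid phi P c ->
  exists c', [/\ valid phi (fun i => P i || (i == k)) c' &
     forall i, i != k -> c' ord0 i = c ord0 i].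
Proof.
move=> cv hv.
have s0 : supp P (0 : 'rV[R]_n) by move=> i _; rewrite mxE.
have hb : forall d t, supp P d -> 0 < t ->
    (dotv c 0 - phi (0 - 1 *: evec k)) * t <= phi (d + t *: evec k) - dotv c d.
  move=> d t hd ht; have := AB _ _ _ k _ _ _ _ cv hv s0 hd ltr01 ht.
  by rewrite mulrC mul1r.
have [c' [h1 _ h3]] := ext_step _ _ _ _ _ cv hv hb.
by exists c'.
Qed.

Lemma complete {R : realType} {n : nat} (phi : 'rV[R]_n -> R) (P : pred 'I_n) c :
  convex_fun_on setT phi -> valid phi P c ->
  exists c', valid phi predT c' /\ forall i, P i -> c' ord0 i = c ord0 i.
Proof.
move=> cv hv.
suff : forall m, exists c', valid phi (fun i => P i || (i < m)%N) c' /\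
     forall i, P i -> c' ord0 i = c ord0 i.
  move=> /(_ n) [c' [h1 h2]]; exists c'; split => //.
  by apply: (valid_mono h1) => i _; rewrite ltn_ord orbT.
elim=> [|m [c' [h1 h2]]].
  by exists c; split => //; apply: (valid_mono hv) => i; rewrite orbF.
have [mn|mn] := ltnP m n; last first.
  exists c'; split => //; apply: (valid_mono h1) => i; rewrite (leq_trans (ltn_ord i) mn) orbT.
  by [].
pose k := Ordinal mn.
have [Pk|Pk] := boolP (P k).
  exists c'; split => //; apply: (valid_mono h1) => i /orP [->//|].
  rewrite ltnS leq_eqVlt => /orP [/eqP ik|->]; last by rewrite orbT.
  by rewrite (_ : i = k) ?Pk //; apply: val_inj.
have [c'' [h3 h4]] := ext_step_any _ _ _ k cv h1.
exists c''; split.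
  apply: (valid_mono h3) => i /orP [->//|].
  rewrite ltnS leq_eqVlt => /orP [/eqP ik|->]; last by rewrite orbT.
  by rewrite (_ : i = k) ?eqxx ?orbT //; apply: val_inj.
move=> i Pi; rewrite h4 ?h2 //; apply/eqP => ik; move: Pk; by rewrite -ik Pi.
Qed.

Lemma conv_comp {R : realType} {n : nat} (g : 'rV[R]_n -> R) (L : 'rV[R]_n -> 'rV[R]_n) C :
  convex_fun_on setT g ->
  (forall a b th, L (th *: a + (1 - th) *: b) = th *: L a + (1 - th) *: L b) ->
  convex_fun_on setT (fun d => g (L d) - C).
Proof.
move=> cv hL a b _ _ th hth; rewrite hL.
have := cv (L a) (L b) I I th hth; lra.
Qed.

Lemma supp0 {R : realType} {n : nat} (d : 'rV[R]_n) : supp pred0 d -> d = 0.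
Proof. by move=> h; apply/rowP => i; rewrite mxE h. Qed.

Lemma maxf {R : realType} {n : nat} (g : 'rV[R]_n -> R) x u b :
  convex_fun_on setT g -> (forall t, 0 < t -> g x + t * b <= g (x + t *: u)) ->
  exists h, subgrad g x h /\ b <= dotv h u.
Proof.
move=> cv hb.
have [u0|un0] := eqVneq u 0.
  have cv0 := conv_comp _ (fun d => x + d) (g x) cv
    (fun a b th => ltac:(apply/rowP => i; rewrite !mxE; ring)).
  have v0 : valid (fun d => g (x + d) - g x) pred0 0.
    by move=> d /supp0 ->; rewrite dotv0l addr0 subrr.
  have [c [hc _]] := complete _ _ _ cv0 v0.
  exists c; split.
    move=> z; have := hc (z - x) (fun i => ltac:(done)).
    have -> : x + (z - x) = z by rewrite addrC subrK.
    lra.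
  have := hb 1 ltr01; rewrite u0 scaler0 addr0 mul1r dotv0r; lra.
have [j uj] : exists j, u ord0 j != 0.
  case: (pickP (fun j => u ord0 j != 0)) => [j hj|h]; first by exists j.
  have u00 : u = 0.
    by apply/rowP => i; rewrite mxE; have := h i => /= /negbFE/eqP.
  by move: un0; rewrite u00 eqxx.
set w := u - evec j.
pose A := fun d : 'rV[R]_n => x + (d + d ord0 j *: w).
have cv2 := conv_comp _ A (g x) cv
    (fun a b th => ltac:(apply/rowP => i; rewrite /A !mxE; ring)).
have v0 : valid (fun d => g (A d) - g x) pred0 0.
  move=> d /supp0 ->; rewrite dotv0l /A mxE scale0r !addr0 subrr; done.
have hb2 : forall d t, supp pred0 d -> 0 < t ->
    b * t <= g (A (d + t *: evec j)) - g x - dotv 0 d.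
  move=> d t /supp0 -> ht; rewrite dotv0l subr0 add0r.
  have -> : A (t *: evec j) = x + t *: u.
    by apply/rowP => i; rewrite /A /w !mxE eqxx /=; ring.
  have := hb t ht; lra.
have [c1 [h1 h2 _]] := ext_step _ _ _ _ _ cv2 v0 hb2.
have [c [hc hc2]] := complete _ _ _ cv2 h1.
have cj : c ord0 j = c1 ord0 j by apply: hc2; rewrite /= eqxx.
exists (c - (dotv c w / u ord0 j) *: evec j); split.
  move=> z.
  set yv := z - x.
  set By := yv - (yv ord0 j / u ord0 j) *: w.
  have eA : A By = z.
    apply/rowP => i; rewrite /A /By /w /yv !mxE eqxx /=.
    set dd := ((i == j)%:R : R); field; exact: uj.
  have := hc By (fun i => ltac:(done)); rewrite eA.
  have -> : dotv c By = dotv (c - dotv c w / u ord0 j *: evec j) (z - x).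
    rewrite /By /yv dotvBl dotvBr dotvZr dotvZl (dotvC (evec j)) dotv_evec !mxE.
    field; exact: uj.
  lra.
rewrite dotvBl dotvZl (dotvC (evec j)) dotv_evec.
have -> : dotv c u = dotv c w + c ord0 j by rewrite /w dotvBr dotv_evec; ring.
have -> : dotv c w / u ord0 j * u ord0 j = dotv c w by field; exact: uj.
rewrite cj; lra.
Qed.



Lemma Gbound_ge0 {R : realType} {n : nat} (g : 'rV[R]_n -> R) (Rad Gg : R) x :
  convex_fun_on setT g ->
  (forall z h, @ball_set _ n Rad z -> subgrad g z h -> enorm h <= Gg) ->
  @ball_set _ n Rad x -> 0 <= Gg.
Proof.
move=> cv hG hx.
have [h0 [s0 _]] := maxf g x 0 0 cv
  (fun t _ => ltac:(rewrite mulr0 addr0 scaler0 addr0; exact: lexx)).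
exact: le_trans (enorm_ge0 h0) (hG _ _ hx s0).
Qed.

Lemma dg_bound {R : realType} {n : nat} (g : 'rV[R]_n -> R) (Rad Gg : R) x h :
  convex_fun_on setT g ->
  (forall z h, @ball_set _ n Rad z -> subgrad g z h -> enorm h <= Gg) ->
  @ball_set _ n Rad x -> subgrad (posp g) x h -> enorm h <= Gg.
Proof.
move=> cv hG hx sh.
have G0 := Gbound_ge0 _ _ _ _ cv hG hx.
have [->|hn0] := eqVneq h 0; first by rewrite enorm0.
have hh0 : 0 < dotv h h.
  rewrite lt_def dotvv_ge0 andbT; apply/eqP => /dotvv_eq0 H; by rewrite H eqxx in hn0.
have key : forall t, 0 < t -> posp g x + t * dotv h h <= posp g (x + t *: h).
  move=> t t0; have := sh (x + t *: h).
  by rewrite (addrC x) addrK dotvZr.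
have [gx0|gx0] := leP 0 (g x).
  have hb : forall t, 0 < t -> g x + t * dotv h h <= g (x + t *: h).
    move=> t t0; have := key t t0; rewrite /posp (max_l gx0) le_max => /orP [//|].
    move=> H; have : 0 < t * dotv h h by apply: mulr_gt0.
    lra.
  have [h' [s' hh']] := maxf g x h _ cv hb.
  have := hG _ _ hx s'.
  have := CS h' h; rewrite -enorm_sq in hh'.
  have := enorm_ge0 h; have := enorm_ge0 h'.
  have enp : 0 < enorm h.
    rewrite lt_def enorm_ge0 andbT; apply/eqP => /enorm_eq0 H; by rewrite H eqxx in hn0.
  nra.
exfalso.
set a := - g x.
set D := g (x + h) - g x.
have a0 : 0 < a by rewrite /a oppr_gt0.
have aD : 0 < a + `|D| by have := normr_ge0 D; lra.
set t := a / (a + `|D|).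
have t0 : 0 < t by rewrite /t divr_gt0.
have t1 : t <= 1 by rewrite /t ler_pdivrMr // mul1r; have := normr_ge0 D; lra.
have tD : t * D <= a.
  apply: le_trans (ler_wpM2l (ltW t0) (ler_norm D)) _.
  rewrite /t mulrAC ler_pdivrMr //; have := normr_ge0 D; nra.
have ex : x + t *: h = t *: (x + h) + (1 - t) *: x.
  by apply/rowP => i; rewrite !mxE; ring.
have hc : g (x + t *: h) <= t * g (x + h) + (1 - t) * g x.
  by rewrite ex; apply: cv => //; rewrite (ltW t0) t1.
have th : 0 < t * dotv h h by apply: mulr_gt0.
have := key t t0; rewrite /posp (max_r (ltW gx0)) add0r le_max => /orP [H|H].
  rewrite /D in tD; rewrite /a in tD; lra.
lra.
Qed.



Ltac dexp := rewrite ?dotvDl ?dotvDr ?dotvBl ?dotvBr ?dotvNl ?dotvNr ?dotvZl ?dotvZr.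

Lemma nsqDZ {R : realType} {n : nat} (s : R) (X Y : 'rV[R]_n) :
  dotv (X + s *: Y) (X + s *: Y) = dotv X X + 2 * s * dotv X Y + s ^+ 2 * dotv Y Y.
Proof. rewrite -{1 2}(scale1r X) dotv_comb; ring. Qed.

Lemma sq_le {R : realType} (a b : R) : 0 <= a -> a <= b -> a ^+ 2 <= b ^+ 2.
Proof. move=> a0 ab; nra. Qed.

Lemma ball_conv {R : realType} {n : nat} (r t : R) (p z : 'rV[R]_n) :
  enorm p <= r -> enorm z <= r -> 0 <= t <= 1 -> enorm (p + t *: (z - p)) <= r.
Proof.
move=> hp hz /andP [t0 t1].
have r0 : 0 <= r := le_trans (enorm_ge0 p) hp.
have -> : p + t *: (z - p) = (1 - t) *: p + t *: z by apply/rowP => i; rewrite !mxE; ring.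
apply: enorm_le_sq => //; rewrite dotv_comb -!enorm_sq.
have := CS p z; have := enorm_ge0 p; have := enorm_ge0 z.
have h1 : 0 <= 1 - t by lra.
move=> ez ep cs.
have e2 : 2 * (1 - t) * t * dotv p z <= 2 * (1 - t) * t * (enorm p * enorm z).
  by apply: ler_wpM2l => //; apply: mulr_ge0 => //; apply: mulr_ge0 => //.
have : (1 - t) * enorm p + t * enorm z <= r.
  have : (1 - t) * enorm p <= (1 - t) * r by apply: ler_wpM2l.
  have : t * enorm z <= t * r by apply: ler_wpM2l.
  lra.
move=> hs.
have hs0 : 0 <= (1 - t) * enorm p + t * enorm z by apply: addr_ge0; apply: mulr_ge0.
have : ((1 - t) * enorm p + t * enorm z) ^+ 2 <= r ^+ 2 by apply: sq_le.
lra.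
Qed.

Lemma proj_nonexp {R : realType} {n : nat} (r : R) (v p z : 'rV[R]_n) :
  Defs.proj (@ball_set _ n r) v p -> enorm z <= r ->
  dotv (p - z) (p - z) <= dotv (v - z) (v - z).
Proof.
move=> [bp hp] hz.
set a := dotv (v - p) (z - p).
set C := dotv (z - p) (z - p).
have C0 : 0 <= C := dotvv_ge0 _.
have key : forall t, 0 < t -> t <= 1 -> 2 * a <= t * C.
  move=> t t0 t1.
  have hq := hp _ (ball_conv r t p z bp hz ltac:(rewrite (ltW t0) t1)).
  have : enorm (v - p) ^+ 2 <= enorm (v - (p + t *: (z - p))) ^+ 2.
    by apply: sq_le; [apply: enorm_ge0 | exact: hq].
  rewrite !enorm_sq.
  have -> : v - (p + t *: (z - p)) = (v - p) + (- t) *: (z - p).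
    by apply/rowP => i; rewrite !mxE; ring.
  rewrite nsqDZ -/a -/C.
  move=> H.
  have : t * (2 * a) <= t * (t * C) by lra.
  by rewrite ler_pM2l.
have a0 : a <= 0.
  rewrite leNgt; apply/negP => ap.
  have aC : 0 < a + C by lra.
  have := key (a / (a + C)) (divr_gt0 ap aC) ltac:(rewrite ler_pdivrMr // mul1r; lra).
  rewrite mulrAC ler_pdivlMr //.
  nra.
have -> : v - z = (v - p) + (-1) *: (z - p) by apply/rowP => i; rewrite !mxE; ring.
have -> : p - z = (-1) *: (z - p) by apply/rowP => i; rewrite !mxE; ring.
rewrite nsqDZ dotvZl dotvZr -/a -/C.
have := dotvv_ge0 (v - p); lra.
Qed.

Lemma FW_prop {R : realType} {n : nat} (S : set 'rV[R]_n) eps x y out :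
  convex_set_of S -> FW_run S eps x y out -> S x ->
  S out /\ exists v, LOO S (out - y) v /\
    (dotv (out - y) (out - v) <= eps \/ enorm (out - y) ^+ 2 <= 3 * eps).
Proof.
move=> cS; elim=> {x y out}.
- move=> x y v hv hc Sx; split => //; by exists v.
- move=> x y v sig out [Sv _] _ /andP [s0 s1] _ _ IH Sx; apply: IH.
  have -> : x + sig *: (v - x) = sig *: v + (1 - sig) *: x.
    by apply/rowP => i; rewrite !mxE; ring.
  by apply: cS => //; rewrite s0 s1.
Qed.

Lemma AFP_loop_prop {R : realType} {n : nat} (S : set 'rV[R]_n) eps xp y xo yo :
  convex_set_of S -> AFP_loop S eps xp y xo yo -> S xp ->
  [/\ S xo, enorm (xo - yo) ^+ 2 <= 3 * eps &
      forall z, S z -> dotv (yo - z) (yo - z) <= dotv (y - z) (y - z)].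
Proof.
move=> cS; elim=> {xp y xo yo}.
- move=> xp y x hfw h3 Sxp; have [Sx _] := FW_prop _ _ _ _ _ cS hfw Sxp; split => //.
- move=> xp y x xo yo hfw h3 _ IH Sxp.
  have [Sx [v [[Sv hv] hc]]] := FW_prop _ _ _ _ _ cS hfw Sxp.
  have hc' : dotv (x - y) (x - v) <= eps by case: hc => // H; lra.
  have [Sxo h3o hz] := IH Sx; split => // z Sz.
  apply: le_trans (hz z Sz) _.
  have hvz := hv z Sz.
  move: h3 hc' hvz; rewrite enorm_sq.
  have -> : y - 2 / 3 *: (y - x) - z = (y - z) + (- (2/3)) *: (y - x).
    by apply/rowP => i; rewrite !mxE; ring.
  rewrite nsqDZ.
  rewrite !dotvBl !dotvBr.
  have := dotvC x y; have := dotvC x z; have := dotvC y z; have := dotvC x v;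
  have := dotvC y v.
  move=> *; nra.
Qed.

Lemma AFP_prop {R : realType} {n : nat} (S : set 'rV[R]_n) eps y1 x0 xo yo :
  convex_set_of S -> AFP_run S eps y1 x0 xo yo -> S x0 ->
  [/\ S xo, enorm (xo - yo) ^+ 2 <= 3 * eps &
      forall z, S z -> dotv (yo - z) (yo - z) <= dotv (y1 - z) (y1 - z)].
Proof.
move=> cS [[h3 [-> ->]]|[_ hl]] Sx0; first by split.
exact: AFP_loop_prop _ _ _ _ _ _ cS hl Sx0.
Qed.



Lemma sum_blocks {R : realType} (F : nat -> R) (M K : nat) :
  \sum_(1 <= t < (M * K).+1) F t =
  \sum_(1 <= m < M.+1) \sum_((m.-1 * K).+1 <= t < (m * K).+1) F t.
Proof.
elim: M => [|M IH]; first by rewrite mul0n !big_geq.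
rewrite (big_cat_nat _ (n := (M * K).+1)) //=; last by rewrite ltnS leq_mul2r leqnSn orbT.
by rewrite IH [in RHS]big_nat_recr.
Qed.

Lemma mblk_in (K m t : nat) : (0 < K)%N -> (1 <= m)%N ->
  ((m.-1 * K).+1 <= t < (m * K).+1)%N -> mblk K t = m.
Proof.
move=> K0; case: m => // m _; rewrite /= mulSn => /andP [h1 h2].
rewrite /mblk; congr S.
have -> : t.-1 = (m * K + (t.-1 - m * K))%N by lia.
rewrite divnMDl // divn_small ?addn0 //; lia.
Qed.

Lemma blk_card (K m : nat) : (1 <= m)%N -> ((m * K).+1 - (m.-1 * K).+1)%N = K.
Proof. by case: m => // m _; rewrite subSS /= mulSn addnK. Qed.

Lemma max0_sq {R : realType} (w l : R) : 0 <= l -> (Num.max 0 w - l) ^+ 2 <= (w - l) ^+ 2.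
Proof.
move=> l0; rewrite /Num.Def.maxr /Order.max; case: ifP => // /negbT; rewrite -leNgt => w0.
nra.
Qed.

Lemma diff_ball {R : realType} {n : nat} {a b : 'rV[R]_n} {r : R} :
  enorm a <= r -> enorm b <= r -> enorm (a - b) <= 2 * r.
Proof.
move=> ha hb; apply: le_trans (enormD _ _) _; rewrite enormN; lra.
Qed.

Lemma posp_ge0 {R : realType} {n : nat} (g : 'rV[R]_n -> R) z : 0 <= posp g z.
Proof.
by rewrite /posp /Num.Def.maxr /Order.max; case: ifP => // /negbT; rewrite -leNgt.
Qed.



Theorem lemma3 (R : realType) (n : nat) (Kset : set 'rV[R]_n) (Rad Gf Gg : R)
  (T K : nat) (eps delta eta : R) (f g : nat -> 'rV[R]_n -> R)
  (x yt y : nat -> 'rV[R]_n) (lam : R^nat) (df dg : nat -> 'rV[R]_n) :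
  0 < Rad ->
  convex_set_of Kset -> compact Kset ->
  Kset 0 -> Kset `<=` @ball_set _ n Rad ->
  (forall t, (1 <= t <= T)%N ->
     convex_fun_on [set: 'rV[R]_n] (f t) /\ convex_fun_on [set: 'rV[R]_n] (g t)) ->
  (forall t, (1 <= t <= T)%N -> forall z h, @ball_set _ n Rad z ->
     subgrad (f t) z h -> enorm h <= Gf) ->
  (forall t, (1 <= t <= T)%N -> forall z h, @ball_set _ n Rad z ->
     subgrad (g t) z h -> enorm h <= Gg) ->
  (0 < K)%N -> (K %| T)%N ->
  0 < eps -> 0 < delta -> 0 < eta ->
  (exists z, Kset z /\ forall t, (1 <= t <= T)%N -> g t z <= 0) ->
  PD_run Kset Rad T K eps delta eta f g x yt y lam df dg ->
  forall (xh : 'rV[R]_n) (l : R),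
    Kset xh -> (forall t, (1 <= t <= T)%N -> g t xh <= 0) -> 0 <= l ->
    \sum_(1 <= t < T.+1)
       (lagr delta eta (f t) (g t) (x (mblk K t)) l
        - lagr delta eta (f t) (g t) xh (lam (mblk K t)))
    <= 2 * Rad ^+ 2 / eta + l ^+ 2 / (2 * eta)
       + Gf * Num.sqrt (3 * eps) * T%:R
       + Gf ^+ 2 * eta * K%:R * T%:R
       + 4 * Gg ^+ 2 * Rad ^+ 2 * eta * K%:R * T%:R
       + Gg * Num.sqrt (3 * eps) * K%:R * \sum_(1 <= m < (T %/ K).+1) lam m
       + (delta ^+ 2 * eta ^+ 3 * K%:R ^+ 2 + Gg ^+ 2 * eta * K%:R ^+ 2)
         * \sum_(1 <= m < (T %/ K).+1) lam m ^+ 2.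
Proof.
move=> Rad0 cK _ _ Kball convfg hGf hGg K0 KT eps0 delta0 eta0 _
  [Kx1 ey1 lam1 hsub hstep] xh l Kxh gxh l0.
set M := (T %/ K)%N.
have hT : T = (M * K)%N by rewrite /M divnK.
set s3 := Num.sqrt (3 * eps).
set D := fun m => dotv (yt m - xh) (yt m - xh).
set E := fun m => (lam m - l) ^+ 2.
have [c1 c1E] : exists c1, c1 = eta * K%:R ^+ 2 * Gf ^+ 2 + K%:R * Gf * s3 + 4 * eta * K%:R ^+ 2 * Rad ^+ 2 * Gg ^+ 2 by eexists.
have [c2 c2E] : exists c2, c2 = K%:R * Gg * s3 by eexists.
have [c3 c3E] : exists c3, c3 = delta ^+ 2 * eta ^+ 3 * K%:R ^+ 2 + Gg ^+ 2 * eta * K%:R ^+ 2 by eexists.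
have inv : forall m, (1 <= m <= M.+1)%N ->
    [/\ Kset (x m), enorm (x m - yt m) ^+ 2 <= 3 * eps & 0 <= lam m].
  elim=> // m IH /andP [_ hm].
  case: m IH hm => [_ _|m IH hm].
    by rewrite ey1 subrr enorm0 expr0n /= lam1; split=> //; lra.
  have [Kxm hxm lm0] := IH ltac:(lia).
  have hm' : (1 <= m.+1 <= T %/ K)%N by rewrite -/M; lia.
  move: (hstep m.+1 hm') => /= [_ hafp hlam].
  have [Kx1' h3 _] := AFP_prop _ _ _ _ _ _ cK hafp Kxm.
  by split => //; rewrite hlam /Num.Def.maxr /Order.max; case: ifP => // /ltW.
have block : forall m, (1 <= m <= M)%N ->
    \sum_((m.-1 * K).+1 <= t < (m * K).+1)
       (lagr delta eta (f t) (g t) (x (mblk K t)) l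
        - lagr delta eta (f t) (g t) xh (lam (mblk K t)))
    <= ((D m + E m) - (D m.+1 + E m.+1)) * (2 * eta)^-1 + c1 + c2 * lam m + c3 * lam m ^+ 2.
  move=> m /andP [m1 mM].
  have [Kxm hxm lm0] := inv m ltac:(lia).
  have hm' : (1 <= m <= T %/ K)%N by rewrite -/M m1 mM.
  move: (hstep m hm') => /= [hproj hafp hlam].
  have [_ _ hyt] := AFP_prop _ _ _ _ _ _ cK hafp Kxm.
  have bx := Kball _ Kxm; have bh := Kball _ Kxh.
  have mKM : (m * K <= M * K)%N by rewrite leq_mul2r mM orbT.
  have tin : forall t, ((m.-1 * K).+1 <= t < (m * K).+1)%N -> (1 <= t <= T)%N.
    move=> t; rewrite hT; move: mKM; generalize (m.-1 * K)%N (m * K)%N (M * K)%N.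
    move=> a b c; lia.
  have -> : \sum_((m.-1 * K).+1 <= t < (m * K).+1)
       (lagr delta eta (f t) (g t) (x (mblk K t)) l
        - lagr delta eta (f t) (g t) xh (lam (mblk K t))) =
    \sum_((m.-1 * K).+1 <= t < (m * K).+1)
       (lagr delta eta (f t) (g t) (x m) l
        - lagr delta eta (f t) (g t) xh (lam m)).
    by apply: eq_big_nat => t ht; rewrite (mblk_in _ _ _ K0 m1 ht).
  set xm := x m; set lm := lam m.
  set gx := \sum_((m.-1 * K).+1 <= t < (m * K).+1) (df t + lm *: dg t).
  set gl := \sum_((m.-1 * K).+1 <= t < (m * K).+1) (posp (g t) xm - delta * eta * lm).
  have term : forall t, ((m.-1 * K).+1 <= t < (m * K).+1)%N ->
     lagr delta eta (f t) (g t) xm l - lagr delta eta (f t) (g t) xh lm <=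
     dotv (df t + lm *: dg t) (xm - xh) + (l - lm) * (posp (g t) xm - delta * eta * lm).
    move=> t ht; have tT := tin t ht.
    have [sf sg] := hsub t tT; rewrite (mblk_in _ _ _ K0 m1 ht) -/xm in sf sg.
    have pxh : posp (g t) xh = 0.
      rewrite /posp /Num.Def.maxr /Order.max; case: ifP => // /negbT; rewrite -leNgt => h.
      by apply/eqP; rewrite eq_le h gxh.
    have := sf xh; have := sg xh; rewrite /lagr pxh.
    rewrite dotvDl dotvZl !dotvBr.
    move=> h2 h1.
    have h3 : lm * (posp (g t) xm + (dotv (dg t) xh - dotv (dg t) xm)) <= 0.
      by apply: mulr_ge0_le0 => //; rewrite pxh in h2.
    have h4 : 0 <= delta * eta / 2 * (l - lm) ^+ 2.
      by apply: mulr_ge0; [apply: mulr_ge0; [apply: mulr_ge0; apply: ltW|] | apply: sqr_ge0].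
    nra.
  have H := @ler_sum_nat R _ _ _ _ term.
  apply: le_trans H _.
  rewrite big_split /= -dotv_suml -mulr_sumr -/gx -/gl.
  have G0 : 0 <= Gg.
    have [t ht] : exists t, ((m.-1 * K).+1 <= t < (m * K).+1)%N.
      have hlt : (m.-1 * K < m * K)%N by rewrite ltn_mul2r K0 /=; lia.
      by exists (m * K)%N; rewrite ltnSn andbT.
    have tT := tin t ht.
    exact: Gbound_ge0 _ _ _ _ (convfg t tT).2 (hGg t tT) bx.
  have cardK : ((m * K).+1 - (m.-1 * K).+1)%N = K by apply: blk_card.
  set N := K%:R * (Gf + lm * Gg).
  have hgx : enorm gx <= N.
    apply: le_trans (enorm_sum _ _ _ _) _.
    have : \sum_((m.-1 * K).+1 <= t < (m * K).+1) enorm (df t + lm *: dg t) <=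
           \sum_((m.-1 * K).+1 <= t < (m * K).+1) (Gf + lm * Gg).
      apply: ler_sum_nat => t ht; have tT := tin t ht.
      have [sf sg] := hsub t tT; rewrite (mblk_in _ _ _ K0 m1 ht) -/xm in sf sg.
      apply: le_trans (enormD _ _) _; rewrite enormZ ger0_norm //.
      apply: lerD; first exact: hGf t tT _ _ bx sf.
      apply: ler_wpM2l => //; exact: dg_bound _ _ _ _ _ (convfg t tT).2 (hGg t tT) bx sg.
    by rewrite sumr_const_nat cardK -mulr_natl.
  have N0 : 0 <= N := le_trans (enorm_ge0 gx) hgx.
  have hxy : enorm (xm - yt m) <= s3.
    have e3 : 0 <= 3 * eps by lra.
    by rewrite /enorm /s3 ler_sqrt // -enorm_sq.
  have I1 : dotv gx (xm - xh) <= dotv gx (yt m - xh) + N * s3.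
    have -> : dotv gx (xm - xh) = dotv gx (yt m - xh) + dotv gx (xm - yt m).
      by rewrite !dotvBr; ring.
    apply: lerD => //; apply: le_trans (CS _ _) _.
    by apply: ler_pM => //; apply: enorm_ge0.
  have I2 : dotv gx (yt m - xh) <= (D m - D m.+1) / (2 * eta) + eta / 2 * N ^+ 2.
    have hp := proj_nonexp _ _ _ _ hproj bh; rewrite -/lm -/gx in hp.
    have hy := hyt xh Kxh.
    have e1 : yt m - eta *: gx - xh = (yt m - xh) + (- eta) *: gx.
      by apply/rowP => i; rewrite !mxE; ring.
    rewrite e1 nsqDZ (dotvC _ gx) -/(D m) in hp.
    have hn : dotv gx gx <= N ^+ 2 by rewrite -enorm_sq; apply: sq_le => //; apply: enorm_ge0.
    have hn2 : eta ^+ 2 * dotv gx gx <= eta ^+ 2 * N ^+ 2 by apply: ler_wpM2l => //; apply: sqr_ge0.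
    have key : dotv gx (yt m - xh) * (2 * eta) <= D m - D m.+1 + eta ^+ 2 * N ^+ 2.
      rewrite /D in hy hp *; lra.
    have -> : (D m - D m.+1) / (2 * eta) + eta / 2 * N ^+ 2 =
              (D m - D m.+1 + eta ^+ 2 * N ^+ 2) / (2 * eta).
      by field; rewrite gt_eqF.
    by rewrite ler_pdivlMr // mulr_gt0.
  rewrite -/xm -/lm -/gl in hlam.
  have I4 : (l - lm) * gl <= (E m - E m.+1) / (2 * eta) + eta / 2 * gl ^+ 2.
    have h := max0_sq (lm + eta * gl) l l0; rewrite -hlam in h.
    have key : (l - lm) * gl * (2 * eta) <= E m - E m.+1 + eta ^+ 2 * gl ^+ 2.
      rewrite /E -/lm.
      have ex : (lm + eta * gl - l) ^+ 2 = (lm - l) ^+ 2 + 2 * eta * gl * (lm - l) + eta ^+ 2 * gl ^+ 2 by ring.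
      rewrite ex in h; lra.
    have -> : (E m - E m.+1) / (2 * eta) + eta / 2 * gl ^+ 2 =
              (E m - E m.+1 + eta ^+ 2 * gl ^+ 2) / (2 * eta).
      by field; rewrite gt_eqF.
    by rewrite ler_pdivlMr // mulr_gt0.
  set P := \sum_((m.-1 * K).+1 <= t < (m * K).+1) posp (g t) xm.
  have gle : gl = P - K%:R * (delta * eta * lm).
    by rewrite /gl sumrB sumr_const_nat cardK mulr_natl.
  have P0 : 0 <= P by apply: sumr_ge0 => t _; apply: posp_ge0.
  have PU : P <= K%:R * (2 * Rad * Gg).
    have : P <= \sum_((m.-1 * K).+1 <= t < (m * K).+1) (2 * Rad * Gg).
      apply: ler_sum_nat => t ht; have tT := tin t ht.
      have [sf sg] := hsub t tT; rewrite (mblk_in _ _ _ K0 m1 ht) -/xm in sf sg.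
      have pxh : posp (g t) xh = 0.
        rewrite /posp /Num.Def.maxr /Order.max; case: ifP => // /negbT; rewrite -leNgt => h.
        by apply/eqP; rewrite eq_le h gxh.
      have h1 := sg xh; rewrite pxh dotvBr in h1.
      have h2 := CS (dg t) (xm - xh); rewrite dotvBr in h2.
      have h3 := dg_bound _ _ _ _ _ (convfg t tT).2 (hGg t tT) bx sg.
      have h4 := diff_ball bx bh.
      have h5 : enorm (dg t) * enorm (xm - xh) <= Gg * (2 * Rad).
        by apply: ler_pM => //; apply: enorm_ge0.
      lra.
    by rewrite sumr_const_nat cardK => h; rewrite mulrC mulr_natr.
  have I5 : gl ^+ 2 <= 2 * (K%:R * (2 * Rad * Gg)) ^+ 2 + 2 * (K%:R * (delta * eta * lm)) ^+ 2.
    rewrite gle; set Q := K%:R * (delta * eta * lm).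
    have := sqr_ge0 (P + Q); nra.
  have I3 : N ^+ 2 <= 2 * K%:R ^+ 2 * (Gf ^+ 2 + lm ^+ 2 * Gg ^+ 2).
    rewrite /N; have := sqr_ge0 (K%:R * (Gf - lm * Gg)); nra.
  have eta2 : 0 <= eta / 2 by apply: divr_ge0; [apply: ltW|].
  have J1 := ler_wpM2l eta2 I3.
  have J2 := ler_wpM2l eta2 I5.
  have eD : (D m + E m - (D m.+1 + E m.+1)) / (2 * eta) =
            (D m - D m.+1) / (2 * eta) + (E m - E m.+1) / (2 * eta).
    by field; rewrite gt_eqF.
  rewrite eD c1E c2E c3E.
  rewrite /N in I1 I2 J1.
  lra.
rewrite {1}hT sum_blocks.
have H := @ler_sum_nat R 1 M.+1 _ _ (fun m hm => block m hm).
apply: le_trans H _.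
rewrite !big_split /= -mulr_suml -!mulr_sumr sumr_const_nat subn1 /=.
have tel : \sum_(1 <= i < M.+1) (D i + E i - (D i.+1 + E i.+1)) =
    (D 1%N + E 1%N) - (D M.+1 + E M.+1).
  rewrite -(opprB (D M.+1 + E M.+1)) -(telescope_sumr (fun i => D i + E i)) //.
  by rewrite -sumrN; apply: eq_bigr => i _; rewrite opprB.
rewrite tel -c3E.
have D1 : D 1%N <= 4 * Rad ^+ 2.
  rewrite /D -enorm_sq ey1.
  have := diff_ball (Kball _ Kx1) (Kball _ Kxh).
  have := enorm_ge0 (x 1%N - xh); nra.
have E1 : E 1%N = l ^+ 2 by rewrite /E lam1 sub0r sqrrN.
have FM : 0 <= D M.+1 + E M.+1 by apply: addr_ge0; [apply: dotvv_ge0 | apply: sqr_ge0].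
have i2 : 0 < (2 * eta)^-1 by rewrite invr_gt0 mulr_gt0.
have H1 : (D 1%N + E 1%N - (D M.+1 + E M.+1)) / (2 * eta) <= 2 * Rad ^+ 2 / eta + l ^+ 2 / (2 * eta).
  have -> : 2 * Rad ^+ 2 / eta + l ^+ 2 / (2 * eta) = (4 * Rad ^+ 2 + l ^+ 2) / (2 * eta).
    by field; rewrite gt_eqF.
  rewrite ler_pM2r //; lra.
rewrite hT natrM -mulr_natl.
rewrite c1E c2E.
lra.
Qed.
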